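(* Fix $n\ge1$ and order the compositions of $n$ first by increasing length and then, among compositions of equal length, lexicographically. For each composition $J$ of $n$ let $$U_J=\sum_{\sigma\in\mathfrak S_n,\ \mathrm{SC}(\sigma)=\overline{J}^{\sim}}F_{\mathrm{RC}(\sigma)}\in QSym.$$ Then the transition matrix $M_n$, whose column indexed by $J$ gives the coefficients of $U_J$ in the fundamental basis $(F_I)$, is upper unitriangular: $U_J=F_J+\sum_{I<J}m_{I,J}F_I$ for some integers $m_{I,J}$.
   Context: Permutations are words $\sigma_1\cdots\sigma_n$. A word $a_1\cdots a_m$ is initially dominated if $a_1>a_j$ for all $j\ge2$; every permutation factors uniquely as $\sigma=u_1\cdots u_r$ into initially dominated words with increasing first letters, and $\mathrm{SC}(\sigma)=(|u_1|,\ldots,|u_r|)$ is its saillance composition. For a composition $I=(i_1,\ldots,i_r)$ of $n$, $\mathrm{Des}(I)=\{i_1,i_1+i_2,\ldots,i_1+\cdots+i_{r-1}\}$, and $\overline{I}^{\sim}$ denotes the composition of $n$ whose descent set is $\{1,\ldots,n-1\}\setminus\mathrm{Des}(I)$. The recoil composition $\mathrm{RC}(\sigma)$ is the composition of $n$ whose descent set is the set of recoils $\{i: i+1 \text{ appears to the left of } i \text{ in } \sigma\}$. $F_I$ denotes Gessel's fundamental quasi-symmetric function. *)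

(* Defs.v *)
From mathcomp Require Import all_boot all_fingroup.
Set Implicit Arguments. Unset Strict Implicit. Unset Printing Implicit Defensive.

(* Letters of a permutation are 0-based: sigma_j is represented by val (s j),
   with values in {0,...,n-1}; only relative order of letters matters. *)
Definition word (n : nat) (s : 'S_n) : seq nat := [seq val (s i) | i <- enum 'I_n].

Definition is_comp (n : nat) (I : seq nat) : bool :=
  all (fun x => 0 < x) I && (sumn I == n).

Definition Des (I : seq nat) : seq nat := take (size I).-1 (scanl addn 0 I).

(* The composition of n whose descent set is the increasing list D
   (D a sorted sublist of 1..n-1). *)
Definition comp_of_des (n : nat) (D : seq nat) : seq nat :=
  pairmap (fun a b => b - a) 0 (D ++ [:: n]).

(* \overline{J}^~ : descent set is the complement of Des J in {1,...,n-1} *)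
Definition compl_comp (n : nat) (J : seq nat) : seq nat :=
  comp_of_des n [seq i <- iota 1 n.-1 | i \notin Des J].

(* Recoils: i in {1..n-1} such that i+1 appears left of i (1-based values);
   in 0-based letters: letter i appears left of letter i-1. *)
Definition recoils (n : nat) (s : 'S_n) : seq nat :=
  [seq i <- iota 1 n.-1 | index i (word s) < index i.-1 (word s)].

Definition RC (n : nat) (s : 'S_n) : seq nat := comp_of_des n (recoils s).

Definition init_dom (w : seq nat) : bool :=
  if w is a :: t then all (fun b => b < a) t else false.

Definition saillance_fact (us : seq (seq nat)) : bool :=
  all init_dom us && sorted ltn (map (head 0) us).

(* SC(s) = K : cutting the word of s according to K yields the (unique)
   saillance factorization *)
Definition SC_is (n : nat) (s : 'S_n) (K : seq nat) : bool :=
  is_comp n K && saillance_fact (reshape K (word s)).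

Fixpoint lexlt (s t : seq nat) : bool :=
  match s, t with
  | x :: s', y :: t' => (x < y) || ((x == y) && lexlt s' t')
  | [::], _ :: _ => true
  | _, _ => false
  end.

Definition compLt (I J : seq nat) : bool :=
  (size I < size J) || ((size I == size J) && lexlt I J).

(* coefficient of F_I in U_J = sum_{SC(s) = \bar J^~} F_{RC(s)} *)
Definition Mcoef (n : nat) (I J : seq nat) : nat :=
  #|[set s : 'S_n | SC_is s (compl_comp n J) && (RC s == I)]|.

(* Main.v *)
Require Import Defs.
From mathcomp Require Import all_boot all_fingroup.
From mathcomp Require Import zify.
Set Implicit Arguments. Unset Strict Implicit. Unset Printing Implicit Defensive.

Definition dif := fun a b : nat => b - a.

Lemma path_last_ge x s : path leq x s -> x <= last x s.
Proof.
move=> hp; have h := order_path_min leq_trans hp.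
case: s hp h => [|y s] // hp h; exact: (allP h _ (mem_last y s)).
Qed.

Lemma pm_sumn x s : path leq x s -> sumn (pairmap dif x s) = last x s - x.
Proof.
elim: s x => [|y s IH] x /=; first by rewrite subnn.
case/andP=> hxy hp; rewrite IH // /dif; have := path_last_ge hp; lia.
Qed.

Lemma pm_pos x s : path ltn x s -> all (fun k => 0 < k) (pairmap dif x s).
Proof.
elim: s x => [|y s IH] x //= /andP[hxy hp]; rewrite IH // andbT /dif; lia.
Qed.

Lemma pm_scanl x s : path leq x s -> scanl addn x (pairmap dif x s) = s.
Proof.
elim: s x => [|y s IH] x //= /andP[hxy hp]; rewrite /dif subnKC // IH //.
Qed.

Lemma path_cat_lt x s n : path ltn x (s ++ [:: n]) -> all (fun y => y < n) s.
Proof.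
elim: s x => [|y s IH] x //= /andP[hxy hp]; rewrite (IH y hp) andbT.
by apply: (allP (order_path_min ltn_trans hp)); rewrite mem_cat mem_head orbT.
Qed.

Lemma Des_comp n D : 0 < n -> sorted ltn D -> all (fun x => 0 < x < n) D ->
  [/\ Des (comp_of_des n D) = D, is_comp n (comp_of_des n D) &
      size (comp_of_des n D) = (size D).+1].
Proof.
move=> n0 sD aD.
have hp : path ltn 0 (D ++ [:: n]).
  rewrite cat_path /= andbT (path_sortedE ltn_trans) sD andbT; apply/andP; split.
    by apply/allP=> x hx; case/andP: (allP aD x hx).
  case: D sD aD => [|d D] // _ aD /=.
  by case/andP: (allP aD _ (mem_last d D)).
have hq : path leq 0 (D ++ [:: n]) by apply: sub_path hp => a b /ltnW.
split.
- rewrite /Des /comp_of_des size_pairmap size_cat addn1 /=.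
  by rewrite -/dif pm_scanl // take_size_cat.
- rewrite /is_comp /comp_of_des -/dif pm_pos //= pm_sumn // last_cat /= subn0 //.
- by rewrite /comp_of_des size_pairmap size_cat addn1.
Qed.

Lemma scanl_last x s : s != [::] ->
  scanl addn x s = take (size s).-1 (scanl addn x s) ++ [:: x + sumn s].
Proof.
elim: s x => [|y s IH] x // _.
case: s IH => [|z s] IH; first by rewrite /= addn0.
have -> : scanl addn x [:: y, z & s] = (x + y) :: scanl addn (x + y) (z :: s) by [].
rewrite {1}(IH (x+y)) //=; congr (_ :: _ ++ [:: _]); lia.
Qed.

Lemma scanl_path x s : all (fun k => 0 < k) s -> path ltn x (scanl addn x s).
Proof.
elim: s x => [|y s IH] x //= /andP[hy hs]; rewrite IH // andbT; lia.
Qed.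

Lemma comp_Des n J : 0 < n -> is_comp n J ->
  [/\ comp_of_des n (Des J) = J, sorted ltn (Des J) & all (fun x => 0 < x < n) (Des J)].
Proof.
move=> n0 /andP[pJ /eqP sJ].
have J0 : J != [::] by case: J sJ pJ => //= E; rewrite -E in n0.
have E : scanl addn 0 J = Des J ++ [:: n] by rewrite {1}(scanl_last 0 J0) sJ.
have hp : path ltn 0 (Des J ++ [:: n]) by rewrite -E scanl_path.
split.
- rewrite /comp_of_des -E -/dif; apply: (scanlK (g := addn)) => a b; rewrite /dif; lia.
- by move: hp; rewrite cat_path (path_sortedE ltn_trans) => /andP[/andP[]].
- have := path_cat_lt hp; move: hp; rewrite cat_path (path_sortedE ltn_trans).
  move=> /andP[/andP[a1 _] _] a2; apply/allP=> x hx.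
  by rewrite (allP a1 x hx) (allP a2 x hx).
Qed.

Lemma scanl_shift k m s : scanl addn (k + m) s = map (addn k) (scanl addn m s).
Proof. by elim: s m => [|y s IH] m //=; rewrite -addnA IH. Qed.

Lemma Des_cons k K : Des (k :: K) = if K is [::] then [::] else k :: map (addn k) (Des K).
Proof.
case: K => [|x K] //; rewrite /Des /= add0n -(addn0 k) scanl_shift map_take.
by rewrite addn0.
Qed.

Lemma init_dom_le u x : init_dom u -> x \in u -> x <= head 0 u.
Proof.
case: u => [|a t] //= /allP h; rewrite inE => /orP[/eqP -> //|/h]; exact: ltnW.
Qed.

Lemma head_take m s : 0 < m -> head 0 (take m s) = head 0 s.
Proof. by case: m => // m _; case: s. Qed.

Lemma Des_pos K : all (fun k => 0 < k) K -> forall j, j \in Des K -> 0 < j < sumn K.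
Proof.
elim: K => [|k K IH] //= /andP[k0 aK] j; rewrite Des_cons.
case: K IH aK => [|k2 K] IH aK //; rewrite inE => /orP[/eqP ->|].
  by move: aK => /= /andP[]; lia.
case/mapP=> j' /(IH aK) /= h ->; lia.
Qed.

Lemma SC_cut K w : all (fun k => 0 < k) K -> size w = sumn K ->
  saillance_fact (reshape K w) ->
  forall j, j \in Des K -> forall x, x \in take j w -> x < nth 0 w j.
Proof.
elim: K w => [|k K IH] w //= /andP[k0 aK] sw.
rewrite /saillance_fact /= => /andP[/andP[idk aid] srt] j.
rewrite Des_cons; case: K IH aK sw aid srt => [|k2 K] IH aK sw aid srt //.
have k20 : 0 < k2 by case/andP: aK.
have sw2 : size (drop k w) = sumn (k2 :: K) by rewrite size_drop sw; lia.
have h0 : nth 0 w 0 < nth 0 w k.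
  move: srt => /= /andP[+ _]; rewrite !head_take // ?size_drop ?sw //.
  have -> : nth 0 w k = head 0 (drop k w) by rewrite -nth0 nth_drop addn0.
  by rewrite nth0.
have hle : forall x, x \in take k w -> x <= nth 0 w 0.
  by move=> x hx; rewrite nth0 -(head_take _ k0); apply: init_dom_le.
rewrite inE => /orP[/eqP -> x /hle hx|]; first exact: leq_ltn_trans hx h0.
case/mapP=> j' hj' -> x.
have sf2 : saillance_fact (reshape (k2 :: K) (drop k w)).
  by rewrite /saillance_fact aid /=; move: srt => /= /andP[_ ->].
have IH2 := IH (drop k w) aK sw2 sf2 j' hj'.
have [j'0 _] := andP (Des_pos aK hj').
rewrite takeD mem_cat -nth_drop => /orP[/hle hx|/IH2 //].
apply: leq_ltn_trans hx (ltn_trans h0 _).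
have -> : nth 0 w k = nth 0 (drop k w) 0 by rewrite nth_drop addn0.
apply: IH2; rewrite -(nth_take _ j'0); apply: mem_nth.
rewrite size_take sw2 /=; case: ifP => _; lia.
Qed.

Definition DK n J := [seq i <- iota 1 n.-1 | i \notin Des J].

Lemma mem_U n i : (i \in iota 1 n.-1) = (0 < i < n).
Proof. rewrite mem_iota; lia. Qed.

Lemma DK_facts n J : 0 < n -> is_comp n J ->
  Des (compl_comp n J) = DK n J /\ is_comp n (compl_comp n J).
Proof.
move=> n0 cJ.
have sD : sorted ltn (DK n J) by apply: sorted_filter => //; [exact: ltn_trans | exact: iota_ltn_sorted].
have aD : all (fun x => 0 < x < n) (DK n J).
  by apply/allP=> x; rewrite mem_filter mem_U => /andP[].
by have [-> c _] := Des_comp n0 sD aD.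
Qed.

Lemma DesJ_filter n J : 0 < n -> is_comp n J ->
  Des J = [seq i <- iota 1 n.-1 | i \in Des J].
Proof.
move=> n0 cJ; have [_ sJ aJ] := comp_Des n0 cJ.
apply: (irr_sorted_eq ltn_trans ltnn) => //.
  by apply: sorted_filter => //; [exact: ltn_trans | exact: iota_ltn_sorted].
move=> x; rewrite mem_filter mem_U andbC; case: (boolP (x \in Des J)) => h.
  by rewrite (allP aJ x h).
by rewrite andbF.
Qed.

Lemma mem_DK n J i : (i \in DK n J) = (0 < i < n) && (i \notin Des J).
Proof. by rewrite mem_filter mem_U andbC. Qed.

Definition mx (s : seq nat) := foldr maxn 0 s.

Lemma mx_ge s x : x \in s -> x <= mx s.
Proof.
elim: s => [|y s IH] //=; rewrite inE => /orP[/eqP ->|/IH]; first exact: leq_maxl.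
move=> h; exact: leq_trans h (leq_maxr _ _).
Qed.

Lemma mx_mem s : s != [::] -> mx s \in s.
Proof.
elim: s => [|y s IH] //= _; rewrite inE /maxn; case: ltnP => h.
  case: s IH h => [|z s] IH /=; first by rewrite ltn0.
  by move=> _; rewrite IH // orbT.
by rewrite eqxx.
Qed.

Lemma count_mem_sym (A B : seq nat) : uniq A -> uniq B ->
  count (mem A) B = count (mem B) A.
Proof.
move=> uA uB; rewrite -!size_filter; apply: perm_size; apply: uniq_perm.
- exact: filter_uniq. - exact: filter_uniq.
by move=> x; rewrite !mem_filter andbC.
Qed.

Lemma count_sub_eq (a b : pred nat) s : (forall x, a x -> b x) ->
  count a s = count b s -> {in s, a =1 b}.
Proof.
move=> ab; elim: s => [|y s IH] //= E x; rewrite inE => /orP[/eqP ->|hx].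
  case: (boolP (a y)) E => ay; first by rewrite (ab _ ay).
  case: (b y) => //=; have := sub_count ab s; lia.
apply: IH hx; case: (boolP (a y)) E => ay; first by rewrite (ab _ ay) /=; lia.
case: (b y) => //=; have := sub_count ab s; lia.
Qed.


Definition wgood n (w : seq nat) := [/\ uniq w, size w = n & forall v, (v \in w) = (v < n)].
Definition pRw (w : seq nat) i := index i w < index i.-1 w.
Definition recw n w := [seq i <- iota 1 n.-1 | pRw w i].
Definition fcut (w : seq nat) j := (mx (take j w)).+1.

Lemma cut_props n J w : 0 < n -> is_comp n J -> wgood n w ->
  saillance_fact (reshape (compl_comp n J) w) -> forall j, j \in DK n J ->
  [/\ forall x, x \in take j w -> x < nth 0 w j, j <= fcut w j,
      0 < fcut w j < n, ~~ pRw w (fcut w j) & 0 < j < n].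
Proof.
move=> n0 cJ [uw sw mw] sf j hj.
have [DesK cK] := DK_facts n0 cJ.
case/andP: cK => aK /eqP sK.
rewrite -DesK in hj.
have hlt := SC_cut aK (etrans sw (esym sK)) sf hj.
have := Des_pos aK hj; rewrite sK => jn.
have stk : size (take j w) = j by rewrite size_takel // sw; lia.
have ne : take j w != [::] by rewrite -size_eq0 stk; lia.
have mm := mx_mem ne.
have mnth : mx (take j w) < nth 0 w j by exact: hlt.
have nthn : nth 0 w j < n by rewrite -mw mem_nth // sw; lia.
have jle : j <= fcut w j.
  rewrite -{1}stk /fcut -(size_iota 0 (mx (take j w)).+1); apply: uniq_leq_size.
    exact: take_uniq.
  by move=> x /mx_ge hx; rewrite mem_iota; lia.
split => //; first by rewrite /fcut; lia.
rewrite /pRw /fcut /=.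
have mw1 : mx (take j w) \in w by exact: mem_take mm.
have i1 : index (mx (take j w)) w < j by rewrite -in_take.
have mw2 : (mx (take j w)).+1 \in w by rewrite mw; lia.
case: (ltnP (index (mx (take j w)).+1 w) j) => h.
  by rewrite -in_take // in h; have := mx_ge h; rewrite ltnn.
by rewrite -leqNgt; exact: leq_trans (ltnW i1) h.
Qed.

Lemma cut_mono n J w : 0 < n -> is_comp n J -> wgood n w ->
  saillance_fact (reshape (compl_comp n J) w) -> forall j j',
  j \in DK n J -> j' \in DK n J -> j < j' -> fcut w j < fcut w j'.
Proof.
move=> n0 cJ gw sf j j' hj hj' jj.
have [h1 _ _ _ jn] := cut_props n0 cJ gw sf hj.
have [_ _ _ _ j'n] := cut_props n0 cJ gw sf hj'.
case: gw => uw sw mw.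
have stk : size (take j' w) = j' by rewrite size_takel // sw; lia.
have ne : take j w != [::] by rewrite -size_eq0 size_takel ?sw; lia.
have : nth 0 w j \in take j' w by rewrite -(nth_take _ jj) mem_nth // stk.
move/mx_ge; have := h1 _ (mx_mem ne); rewrite /fcut; lia.
Qed.


Lemma F_facts n J w : 0 < n -> is_comp n J -> wgood n w ->
  saillance_fact (reshape (compl_comp n J) w) ->
  [/\ sorted ltn (map (fcut w) (DK n J)),
      forall x, x \in map (fcut w) (DK n J) -> 0 < x < n /\ ~~ pRw w x &
      forall j, j \in DK n J -> j <= fcut w j].
Proof.
move=> n0 cJ gw sf; split.
- apply: (homo_sorted_in (P := mem (DK n J))).
  + by move=> a b ha hb; apply: (cut_mono n0 cJ gw sf).
  + by apply/allP.
  + by apply: sorted_filter => //; [exact: ltn_trans | exact: iota_ltn_sorted].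
- move=> x /mapP[j hj ->]; have [_ _ h1 h2 _] := cut_props n0 cJ gw sf hj; done.
- by move=> j hj; have [_ h _ _ _] := cut_props n0 cJ gw sf hj.
Qed.

Lemma rec_count n J w : 0 < n -> is_comp n J -> wgood n w ->
  saillance_fact (reshape (compl_comp n J) w) ->
  count (pRw w) (iota 1 n.-1) <= count (mem (Des J)) (iota 1 n.-1) /\
  (count (pRw w) (iota 1 n.-1) = count (mem (Des J)) (iota 1 n.-1) ->
   {in iota 1 n.-1, pRw w =1 (fun i => i \notin map (fcut w) (DK n J))}).
Proof.
move=> n0 cJ gw sf.
have [sF aF _] := F_facts n0 cJ gw sf.
set F := map (fcut w) (DK n J) in sF aF *.
set U := iota 1 n.-1.
have uF := sorted_uniq ltn_trans ltnn sF.
have sub : forall i, pRw w i -> i \notin F.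
  by move=> i hi; apply/negP => /aF [_]; rewrite hi.
have c1 : count (pRw w) U <= count (fun i => i \notin F) U := sub_count sub U.
have c2 : count (mem F) U + count (fun i => i \notin F) U = size U by exact: count_predC.
have cF : count (mem F) U = size F.
  rewrite count_mem_sym //; last exact: iota_uniq.
  rewrite -[RHS]count_predT; apply: eq_in_count => x /aF [h _].
  by rewrite /= /U mem_U.
have sF' : size F = count (fun i => i \notin Des J) U by rewrite size_map size_filter.
have c3 : count (mem (Des J)) U + count (fun i => i \notin Des J) U = size U by exact: count_predC.
have e1 : count (fun i => i \notin F) U = size U - size F by rewrite -c2 cF addKn.
have e2 : count (mem (Des J)) U = size U - size F by rewrite sF' -c3 addnK.
split; first by rewrite e2 -e1.
move=> E; apply: count_sub_eq => //; by rewrite E e2 -e1.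
Qed.

Lemma rec_prefix n J w : 0 < n -> is_comp n J -> wgood n w ->
  saillance_fact (reshape (compl_comp n J) w) ->
  count (pRw w) (iota 1 n.-1) = count (mem (Des J)) (iota 1 n.-1) ->
  forall x, x < n -> count (mem (Des J)) (iota 1 x) <= count (pRw w) (iota 1 x).
Proof.
move=> n0 cJ gw sf E x xn.
have [_ hin] := rec_count n0 cJ gw sf; have eqU := hin E.
have [sF aF fle] := F_facts n0 cJ gw sf.
set F := map (fcut w) (DK n J) in sF aF eqU *.
have uF := sorted_uniq ltn_trans ltnn sF.
have uDK : uniq (DK n J) by apply: filter_uniq; exact: iota_uniq.
set V := iota 1 x.
have VU : forall i, i \in V -> 0 < i < n by move=> i; rewrite mem_iota; lia.
have a1 : count (pRw w) V = count (fun i => i \notin F) V.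
  by apply: eq_in_count => i /VU hi; apply: eqU; rewrite mem_U.
have a2 : count (mem (Des J)) V = count (fun i => i \notin DK n J) V.
  by apply: eq_in_count => i /VU hi; rewrite /= mem_DK hi negbK.
have a3 : count (mem F) V <= count (mem (DK n J)) V.
  rewrite (count_mem_sym uF (iota_uniq _ _)) (count_mem_sym uDK (iota_uniq _ _)) count_map.
  rewrite -(@eq_in_count _ (fun j => (j \in DK n J) && (fcut w j \in V)) (preim (fcut w) (mem V))); last first.
    by move=> j hj; rewrite /= hj.
  apply: sub_count => j /andP[hj]; rewrite !mem_iota.
  have := fle j hj; move: hj; rewrite mem_DK => /andP[h1 _] h2 h3; rewrite /= mem_iota; lia.
have b1 : count (mem F) V + count (fun i => i \notin F) V = x.
  by rewrite -(size_iota 1 x); exact: count_predC.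
have b2 : count (mem (DK n J)) V + count (fun i => i \notin DK n J) V = x.
  by rewrite -(size_iota 1 x); exact: count_predC.
have e1 : count (fun i => i \notin F) V = x - count (mem F) V by rewrite -b1 addKn.
have e2 : count (fun i => i \notin DK n J) V = x - count (mem (DK n J)) V by rewrite -b2 addKn.
by rewrite a1 a2 e1 e2 leq_sub2l.
Qed.

Lemma lexlt_cat p a b : lexlt (p ++ a) (p ++ b) = lexlt a b.
Proof. by elim: p => //= x p ->; rewrite ltnn eqxx. Qed.

Lemma LL n (P Q : pred nat) t : 0 < t < n -> P t -> ~~ Q t ->
  (forall i, 0 < i < t -> P i = Q i) ->
  lexlt (comp_of_des n [seq i <- iota 1 n.-1 | P i])
        (comp_of_des n [seq i <- iota 1 n.-1 | Q i]).
Proof.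
move=> tn Pt nQt PQ.
have eU : iota 1 n.-1 = iota 1 t.-1 ++ t :: iota t.+1 (n.-1 - t).
  have -> : n.-1 = t.-1 + (n.-1 - t).+1 by lia.
  rewrite iotaD /= (_ : 1 + t.-1 = t) //; [congr (_ ++ _ :: iota _ _); lia | lia].
rewrite eU !filter_cat /= Pt (negPf nQt).
have ec : [seq i <- iota 1 t.-1 | P i] = [seq i <- iota 1 t.-1 | Q i].
  by apply: eq_in_filter => i; rewrite mem_iota => h; apply: PQ; lia.
rewrite ec /comp_of_des -!catA !pairmap_cat lexlt_cat.
set c := [seq i <- iota 1 t.-1 | Q i].
have lc : last 0 c < t.
  have := mem_last 0 c; rewrite inE => /orP[/eqP -> | ]; first by lia.
  rewrite mem_filter mem_iota => /andP[_ /andP[_ h]]; apply: (leq_trans h); lia.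
case E : [seq i <- iota t.+1 (n.-1 - t) | Q i] => [|y r] /=.
  by rewrite ltn_sub2r //; lia.
have : y \in [seq i <- iota t.+1 (n.-1 - t) | Q i] by rewrite E mem_head.
rewrite mem_filter mem_iota => /andP[_ h].
by rewrite ltn_sub2r //; lia.
Qed.

Lemma iota_r m t : iota m t.+1 = iota m t ++ [:: m + t].
Proof. elim: t m => [|t IH] m; first by rewrite addn0.
change (m :: iota m.+1 t.+1 = (m :: iota m.+1 t) ++ [:: m + t.+1]); by rewrite IH addSnnS. Qed.

Lemma recw_sorted n w : sorted ltn (recw n w) /\ all (fun x => 0 < x < n) (recw n w).
Proof.
split; first by apply: sorted_filter => //; [exact: ltn_trans | exact: iota_ltn_sorted].
by apply/allP=> x; rewrite mem_filter mem_U => /andP[].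
Qed.

Lemma M1 n J w : 0 < n -> is_comp n J -> wgood n w ->
  saillance_fact (reshape (compl_comp n J) w) ->
  comp_of_des n (recw n w) != J -> compLt (comp_of_des n (recw n w)) J.
Proof.
move=> n0 cJ gw sf ne.
have [cJd sJ aJ] := comp_Des n0 cJ.
have [sR aR] := recw_sorted n w.
have [_ _ szR] := Des_comp n0 sR aR.
have [_ _ szJ] := Des_comp n0 sJ aJ.
have [le hin] := rec_count n0 cJ gw sf.
have eR : size (recw n w) = count (pRw w) (iota 1 n.-1) by rewrite size_filter.
have eJ : size (Des J) = count (mem (Des J)) (iota 1 n.-1).
  by rewrite {1}(DesJ_filter n0 cJ) size_filter.
rewrite -[X in compLt _ X]cJd /compLt szR szJ ltnS eqSS eR eJ.
move: le; rewrite leq_eqVlt => /orP[/eqP E|->] //; rewrite E ltnn eqxx /=.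
have : has (fun i => pRw w i != (i \in Des J)) (iota 1 n.-1).
  apply: contraT => /hasPn h; suff: comp_of_des n (recw n w) == J by rewrite (negbTE ne).
  rewrite -[X in _ == X]cJd; apply/eqP.
  congr comp_of_des; rewrite {1}(DesJ_filter n0 cJ) /recw.
  apply: eq_in_filter => i /h; by rewrite negbK => /eqP.
case/hasP=> i0 hi0 di0.
have exP : exists i, (0 < i < n) && (pRw w i != (i \in Des J)).
  by exists i0; rewrite di0 -mem_U hi0.
case: (ex_minnP exP) => t /andP[tn dt] tmin.
have agree : forall i, 0 < i < t -> pRw w i = (i \in Des J).
  move=> i /andP[ip it]; case: (boolP (pRw w i == (i \in Des J))) => [/eqP //| d].
  have := tmin i; rewrite d andbT ip (ltn_trans it (proj2 (andP tn))) => /(_ isT) h.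
  by rewrite leqNgt it in h.
have et : iota 1 t = iota 1 t.-1 ++ [:: t].
  by case: t tn {dt tmin agree} => // t _; rewrite iota_r add1n.
have pre := rec_prefix n0 cJ gw sf E (proj2 (andP tn)).
move: pre; rewrite et !count_cat /=.
rewrite (@eq_in_count _ (mem (Des J)) (pRw w) (iota 1 t.-1)) ?addn0; last first.
  by move=> i; rewrite mem_iota => hi; rewrite /= agree //; move: hi (tn); clear; lia.
rewrite leq_add2l => pt.
have Pt : pRw w t by move: dt pt; case: (pRw w t); case: (t \in Des J).
have nQt : t \notin Des J by move: dt pt; case: (pRw w t); case: (t \in Des J).
rewrite {1}(DesJ_filter n0 cJ); exact: (LL (P := pRw w) (Q := mem (Des J)) tn Pt nQt).
Qed.

Lemma M2 n J w : 0 < n -> is_comp n J -> wgood n w ->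
  saillance_fact (reshape (compl_comp n J) w) -> recw n w = Des J ->
  (forall j, j \in DK n J -> forall v, v < n -> (index v w < j) = (v < j)) /\
  (forall i, 0 < i < n -> i \notin DK n J -> pRw w i).
Proof.
move=> n0 cJ gw sf RJ.
have agU : forall i, 0 < i < n -> pRw w i = (i \in Des J).
  by move=> i hi; rewrite -RJ mem_filter mem_U hi andbT.
split; last first.
  by move=> i hi; rewrite mem_DK hi /= negbK => h; rewrite agU.
have [_ hin] := rec_count n0 cJ gw sf.
have [sF aF fle] := F_facts n0 cJ gw sf.
have E : count (pRw w) (iota 1 n.-1) = count (mem (Des J)) (iota 1 n.-1).
  by apply: eq_in_count => i; rewrite mem_U => /agU.
have eqU := hin E.
have sDK : sorted ltn (DK n J).
  by apply: sorted_filter => //; [exact: ltn_trans | exact: iota_ltn_sorted].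
have FD : map (fcut w) (DK n J) = DK n J.
  apply: (irr_sorted_eq ltn_trans ltnn) => // x.
  case: (boolP (0 < x < n)) => hx.
    have h : (x \in Des J) = (x \notin map (fcut w) (DK n J)).
      by rewrite -agU // eqU // mem_U.
    by rewrite mem_DK hx /= h negbK.
  rewrite mem_DK (negPf hx); apply/negP => /aF [h _]; by rewrite h in hx.
have fid : forall j, j \in DK n J -> fcut w j = j.
  move=> j hj; rewrite -{1}(nth_index 0 hj).
  by rewrite -(nth_map 0 0 (fcut w)) ?index_mem // FD nth_index.
case: gw => uw sw mw.
move=> j hj v vn; have fj := fid j hj; rewrite /fcut in fj.
have vw : v \in w by rewrite mw.
apply/idP/idP.
  rewrite -in_take // => /mx_ge; rewrite -ltnS fj //.
move=> vj; rewrite -in_take //; apply: contraT => nv.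
have : uniq (v :: take j w) by rewrite /= nv take_uniq.
move/uniq_leq_size => /(_ (iota 0 j)).
rewrite /= size_iota size_takel ?sw; last first.
  have [_ _ _ _ h] := cut_props n0 cJ (And3 uw sw mw) sf hj; exact: ltnW (proj2 (andP h)).
rewrite ltnn; apply => x; rewrite inE mem_iota add0n => /orP[/eqP ->//|/mx_ge].
by rewrite -ltnS fj.
Qed.

Definition condI n (D : seq nat) (w : seq nat) :=
  (forall j, j \in D -> forall v, v < n -> (index v w < j) = (v < j)) /\
  (forall i, 0 < i < n -> i \notin D -> index i w < index i.-1 w).

Lemma pi_val n D w : wgood n w -> condI n D w ->
  forall v a b, a <= v -> v < b -> b <= n -> (a == 0) || (a \in D) ->
  (b == n) || (b \in D) -> (forall i, a < i < b -> i \notin D) ->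
  index v w = a + b - 1 - v.
Proof.
move=> [uw sw mw] [h1 h2] v a b av vb bn ha hb hab.
have chain : forall t u, a <= u -> u + t < b -> index (u + t) w + t <= index u w.
  elim=> [|t IH] u au ut; first by rewrite !addn0.
  have ut' : u + t < b by move: ut; clear; lia.
  have IH' := IH u au ut'.
  have st : index (u + t).+1 w < index (u + t) w.
    apply: (h2 (u + t).+1); first by move: ut bn; clear; lia.
    by apply: hab; move: ut au; clear; lia.
  rewrite addnS; apply: leq_trans IH'; by rewrite addnS -addSn leq_add2r.
have up : forall x, x < b -> index x w < b.
  move=> x xb; case/orP: hb => [/eqP e|hb].
    by rewrite e -sw index_mem mw -e.
  by rewrite h1 //; apply: leq_trans xb bn.
have A : a <= index (b.-1) w.
  case/orP: ha => [/eqP -> //|ha]; rewrite leqNgt h1 //; first by move: av vb; clear; lia.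
  by move: vb bn; clear; lia.
have B := chain (b.-1 - v) v av (ltac:(move: vb; clear; lia)).
have C := chain (v - a) a (leqnn a) (ltac:(move: av vb; clear; lia)).
have Da := up a (leq_ltn_trans av vb).
rewrite (_ : v + (b.-1 - v) = b.-1) in B; last by move: vb; clear; lia.
rewrite (_ : a + (v - a) = v) in C; last by move: av; clear; lia.
move: A B C Da av vb; generalize (index v w) (index a w) (index b.-1 w).
clear; lia.
Qed.

Lemma pi_unique n D w1 w2 : wgood n w1 -> wgood n w2 -> condI n D w1 -> condI n D w2 ->
  w1 = w2.
Proof.
move=> g1 g2 c1 c2.
have E : forall v, v < n -> index v w1 = index v w2.
  move=> v vn.
  pose P x := ((x == 0) || (x \in D)) && (x <= v).
  have exP : exists x, P x by exists 0.
  have ubP : forall x, P x -> x <= v by move=> x /andP[].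
  case: (ex_maxnP exP ubP) => a /andP[Pa av] amax.
  pose Q x := ((x == n) || (x \in D)) && (v < x).
  have exQ : exists x, Q x by exists n; rewrite /Q eqxx vn.
  case: (ex_minnP exQ) => b /andP[Qb vb] bmin.
  have bn : b <= n by apply: bmin; rewrite /Q eqxx vn.
  have hab : forall i, a < i < b -> i \notin D.
    move=> i /andP[ai ib]; apply/negP => iD.
    case: (leqP i v) => iv.
      by have := amax i; rewrite /P iD orbT iv => /(_ isT); lia.
    by have := bmin i; rewrite /Q iD orbT iv => /(_ isT); lia.
  by rewrite (pi_val g1 c1 av vb bn Pa Qb hab) (pi_val g2 c2 av vb bn Pa Qb hab).
case: g1 g2 => [u1 s1 m1] [u2 s2 m2].
apply: (@eq_from_nth _ 0); first by rewrite s1 s2.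
move=> i hi; set x := nth 0 w1 i.
have xw : x \in w1 by exact: mem_nth.
have xn : x < n by rewrite -m1.
have ix : index x w1 = i by exact: index_uniq.
by rewrite -ix E // nth_index // m2.
Qed.

Fixpoint blocks (a : nat) (K : seq nat) : seq (seq nat) :=
  if K is k :: K' then rev (iota a k) :: blocks (a + k) K' else [::].

Definition W a K := flatten (blocks a K).

Lemma W_cons a k K : W a (k :: K) = rev (iota a k) ++ W (a + k) K.
Proof. by []. Qed.

Lemma W_perm a K : perm_eq (W a K) (iota a (sumn K)).
Proof.
elim: K a => [|k K IH] a //; rewrite W_cons /= iotaD.
apply: perm_cat; [by rewrite perm_rev | exact: IH].
Qed.

Lemma W_reshape a K : reshape K (W a K) = blocks a K.
Proof.
elim: K a => [|k K IH] a //; rewrite W_cons /=.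
by rewrite take_size_cat ?drop_size_cat ?IH // size_rev size_iota.
Qed.

Lemma rev_iota_S a k : rev (iota a k.+1) = (a + k) :: rev (iota a k).
Proof. by rewrite iota_r rev_cat. Qed.

Lemma blocks_sf a K : all (fun k => 0 < k) K -> saillance_fact (blocks a K).
Proof.
rewrite /saillance_fact; elim: K a => [|k K IH] a //= /andP[k0 aK].
case: k k0 => // k _; have /andP[h1 h2] := IH (a + k.+1) aK.
rewrite rev_iota_S /= h1 andbT.
rewrite all_rev; apply/andP; split.
  by apply/allP => x; rewrite mem_iota; lia.
case: K aK {IH h1} h2 => [|k2 K] //= /andP[k20 _] ->; rewrite andbT.
case: k2 k20 => // k2 _; rewrite rev_iota_S /=; lia.
Qed.

Lemma index_rev_iota a k x : a <= x < a + k -> index x (rev (iota a k)) = a + k.-1 - x.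
Proof.
move=> hx; set p := a + k.-1 - x.
have pk : p < k by rewrite /p; lia.
have -> : x = nth 0 (rev (iota a k)) p.
  by rewrite nth_rev size_iota // nth_iota; [rewrite /p; lia | rewrite /p; lia].
by rewrite index_uniq // ?size_rev ?size_iota // rev_uniq iota_uniq.
Qed.

Lemma Des_small k K x : x < k -> x \notin Des (k :: K).
Proof.
move=> xk; rewrite Des_cons; case: K => // y K; rewrite inE negb_or.
apply/andP; split; first by rewrite neq_ltn xk.
by apply/mapP => -[z _ e]; move: xk; rewrite e; lia.
Qed.

Lemma Des_eq k K : K != [::] -> k \in Des (k :: K).
Proof. by rewrite Des_cons; case: K => // y K _; rewrite mem_head. Qed.

Lemma Des_big k K x : K != [::] -> k < x -> (x \in Des (k :: K)) = (x - k \in Des K).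
Proof.
rewrite Des_cons; case: K => // y K _ kx; rewrite inE (gtn_eqF kx) /=.
apply/mapP/idP => [[z hz ->]|h]; first by rewrite addKn.
by exists (x - k) => //; rewrite subnKC // ltnW.
Qed.

Lemma W_rec a K : all (fun k => 0 < k) K -> forall i, a < i < a + sumn K ->
  (index i (W a K) < index i.-1 (W a K)) = (i - a \notin Des K).
Proof.
elim: K a => [|k K IH] a; first by move=> _ i /=; rewrite addn0; lia.
move=> /= /andP[k0 aK] i hi.
case: (ltngtP i (a + k)) => h; rewrite W_cons !index_cat !mem_rev !mem_iota size_rev size_iota.
- have -> : a <= i < a + k by lia.
  have -> : a <= i.-1 < a + k by lia.
  rewrite !index_rev_iota; [|lia|lia].
  rewrite Des_small; last by lia.
  by apply/idP; lia.
- have KK : K != [::] by case: K {IH aK} hi => //=; lia.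
  have -> : (a <= i < a + k) = false by lia.
  have -> : (a <= i.-1 < a + k) = false by lia.
  rewrite ltn_add2l IH //; last by lia.
  by rewrite Des_big ?subnDA //; lia.
- have KK : K != [::] by case: K {IH aK} hi => //=; lia.
  have -> : (a <= i < a + k) = false by lia.
  have -> : (a <= i.-1 < a + k) by lia.
  rewrite h index_rev_iota; last by lia.
  rewrite (_ : a + k - a = k); last by lia.
  by rewrite Des_eq // (_ : a + k.-1 - (a + k).-1 = 0) ?ltn0 //; lia.
Qed.

Lemma word_good n (s : 'S_n) : wgood n (word s).
Proof.
split.
- rewrite /word map_inj_uniq ?enum_uniq // => i j /val_inj; exact: perm_inj.
- by rewrite /word size_map size_enum_ord.
move=> v; apply/mapP/idP => [[i _ ->]|vn]; first exact: ltn_ord.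
exists ((s^-1)%g (Ordinal vn)); first by rewrite mem_enum.
by rewrite permKV.
Qed.

Lemma nth_word n (s : 'S_n) (i : 'I_n) : nth 0 (word s) i = val (s i).
Proof. rewrite /word (nth_map i) ?size_enum_ord //; congr (val (s _)); exact: nth_ord_enum. Qed.

Lemma word_inj n (s1 s2 : 'S_n) : word s1 = word s2 -> s1 = s2.
Proof.
move=> H; apply/permP => i; apply: val_inj.
by have := congr1 (fun w => nth 0 w i) H; rewrite /= !nth_word.
Qed.

Lemma perm_of_word n w : wgood n w -> exists s : 'S_n, word s = w.
Proof.
case=> uw sw mw.
have lt : forall i : 'I_n, nth 0 w i < n by move=> i; rewrite -mw mem_nth // sw.
pose f := fun i => Ordinal (lt i).
have finj : injective f.
  move=> i j /(congr1 val) /= /eqP; rewrite nth_uniq ?sw // => /eqP; exact: val_inj.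
exists (perm finj); rewrite /word.
rewrite (eq_map (g := fun i => nth 0 w (val i))); last by move=> i; rewrite permE.
by rewrite (map_comp (nth 0 w) val) val_enum_ord -sw -/(mkseq _ _) mkseq_nth.
Qed.

Lemma recw_Des n J w : 0 < n -> is_comp n J -> comp_of_des n (recw n w) = J ->
  recw n w = Des J.
Proof.
move=> n0 cJ E; have [sR aR] := recw_sorted n w.
have [D _ _] := Des_comp n0 sR aR; by rewrite -D E.
Qed.

Lemma condI_of n J (s : 'S_n) : 0 < n -> is_comp n J ->
  SC_is s (compl_comp n J) -> RC s = J -> condI n (DK n J) (word s).
Proof.
move=> n0 cJ /andP[_ sf] E.
have RJ : recw n (word s) = Des J by apply: recw_Des.
exact: (M2 n0 cJ (word_good s) sf RJ).
Qed.

Theorem mainTheorem3 (n : nat) (J : seq nat) :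
  0 < n -> is_comp n J ->
  Mcoef n J J = 1 /\
  (forall I : seq nat, is_comp n I -> I != J -> Mcoef n I J != 0 -> compLt I J).
Proof.
move=> n0 cJ.
have [DesK cK] := DK_facts n0 cJ.
split; last first.
  move=> I _ IJ; rewrite /Mcoef cards_eq0 => /set0Pn [s]; rewrite inE.
  case/andP=> /andP[_ sf] /eqP E; rewrite -E in IJ *.
  exact: (M1 n0 cJ (word_good s) sf IJ).
set K := compl_comp n J in DesK cK *.
have aK : all (fun k => 0 < k) K by case/andP: cK.
have sK : sumn K = n by case/andP: cK => _ /eqP.
have gw0 : wgood n (W 0 K).
  have p := W_perm 0 K; rewrite sK in p; split.
  - by rewrite (perm_uniq p) iota_uniq.
  - by rewrite (perm_size p) size_iota.
  - by move=> v; rewrite (perm_mem p) mem_iota.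
have [s0 ws0] := perm_of_word gw0.
have Ps0 : SC_is s0 K && (RC s0 == J).
  rewrite /SC_is cK ws0 W_reshape blocks_sf //=.
  rewrite /RC -[recoils s0]/(recw n (word s0)) ws0.
  have [cJd _ _] := comp_Des n0 cJ.
  rewrite -[X in _ == X]cJd; apply/eqP; congr comp_of_des.
  rewrite (DesJ_filter n0 cJ) /recw; apply: eq_in_filter => i; rewrite mem_U => hi.
  by rewrite /pRw W_rec // ?sK ?add0n // subn0 DesK mem_DK hi /= negbK.
rewrite /Mcoef -/K -(cards1 s0); congr (#|pred_of_set _|).
apply/setP => s; rewrite !inE; apply/idP/eqP => [Ps|->//].
apply: word_inj; apply: (pi_unique (word_good s) (word_good s0)).
- by case/andP: Ps => h /eqP; apply: condI_of.
- by case/andP: Ps0 => h /eqP; apply: condI_of.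
Qed.
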